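(* Let $(G,*,\le)$ be a totally ordered commutative semigroup, let $n\ge 1$, and let $a_1,a_2,\ldots,a_{2n}\in G$ (not necessarily distinct) with $a_1\le a_2\le\cdots\le a_{2n}$. Let $N\in G$. Suppose there are indices $i_1,j_1,\ldots,i_n,j_n$ with $\{i_1,j_1,\ldots,i_n,j_n\}=\{1,2,\ldots,2n\}$ (so these $2n$ indices are pairwise distinct and each of $1,\ldots,2n$ is used exactly once) such that $$a_{i_k}*a_{j_k}<N\quad\text{for all }k=1,\ldots,n.$$ Then $$a_k*a_{2n+1-k}<N\quad\text{for all }k=1,\ldots,n,$$ i.e. $a_1*a_{2n}<N$, $a_2*a_{2n-1}<N$, $\ldots$, $a_n*a_{n+1}<N$.
   Context: A totally ordered commutative semigroup is a triple $(G,*,\le)$ where $(G,* )$ is a commutative semigroup (an associative, commutative binary operation $*$ on a set $G$) and $\le$ is a total order on $G$ such that for all $\alpha,\beta,\gamma,\delta\in G$: if $\alpha\le\beta$ and $\gamma\le\delta$ then $\alpha*\gamma\le\beta*\delta$. Here $x<y$ means $x\le y$ and $x\ne y$. *)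

(* Defs.v *)
From HB Require Import structures.
From mathcomp Require Import all_boot all_order.
Set Implicit Arguments. Unset Strict Implicit. Unset Printing Implicit Defensive.
Import Order.TTheory.
Local Open Scope order_scope.

Definition tocs (d : Order.disp_t) (G : orderType d) (op : G -> G -> G) : Prop :=
  associative op /\ commutative op /\
  (forall x y z w : G, x <= y -> z <= w -> op x z <= op y w).

(* Main.v *)
Require Import Defs.
From HB Require Import structures.
From mathcomp Require Import all_boot all_order.
From mathcomp Require Import zify.
From Stdlib Require Import Classical.
Import Order.TTheory.
Local Open Scope order_scope.

Lemma mono_aux (d : Order.disp_t) (G : orderType d) (n : nat) (a : nat -> G)
  (ha : forall k, (1 <= k)%N -> (k < n)%N -> a k <= a k.+1) :
  forall e p, (1 <= p)%N -> (p + e <= n)%N -> a p <= a (p + e).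
Proof.
elim=> [|e IH] p hp hpe; first by rewrite addn0.
apply: le_trans (IH p hp _) _; first lia.
rewrite addnS; apply: ha; lia.
Qed.

Theorem theorem2p2 (d : Order.disp_t) (G : orderType d) (op : G -> G -> G)
  (HG : tocs op) (n : nat) (hn : (1 <= n)%N) (a : nat -> G)
  (ha : forall k, (1 <= k)%N -> (k < 2 * n)%N -> a k <= a k.+1)
  (N : G) (i j : nat -> nat)
  (hrange : forall k, (1 <= k <= n)%N ->
      (1 <= i k <= 2 * n)%N /\ (1 <= j k <= 2 * n)%N)
  (hcover : forall m, (1 <= m <= 2 * n)%N ->
      exists k, (1 <= k <= n)%N /\ (i k = m \/ j k = m))
  (hij : forall k, (1 <= k <= n)%N -> i k <> j k)
  (hinj : forall k l, (1 <= k <= n)%N -> (1 <= l <= n)%N -> k <> l ->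
      i k <> i l /\ i k <> j l /\ j k <> i l /\ j k <> j l)
  (hlt : forall k, (1 <= k <= n)%N -> op (a (i k)) (a (j k)) < N) :
  forall k, (1 <= k <= n)%N -> op (a k) (a (2 * n + 1 - k)) < N.
Proof.
move=> k /andP[hk1 hkn].
have mono : forall p q, (1 <= p)%N -> (p <= q)%N -> (q <= 2 * n)%N -> a p <= a q.
  move=> p q hp hpq hq.
  have -> : q = (p + (q - p))%N by lia.
  apply: (@mono_aux d G (2 * n)%N a ha); lia.
case: HG => _ [Hc Hm].
set t := (2 * n + 1 - k)%N.
case: (classic (exists kk, (1 <= kk <= n)%N /\
   (((t <= i kk)%N /\ (k <= j kk)%N) \/ ((t <= j kk)%N /\ (k <= i kk)%N)))).
  move=> [kk [hkk [[h1 h2]|[h1 h2]]]]; have [/andP[r1 r2] /andP[r3 r4]] := hrange kk hkk.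
    apply: le_lt_trans (hlt kk hkk).
    rewrite Hc; apply: Hm; apply: mono => //; lia.
  apply: le_lt_trans (hlt kk hkk).
  apply: Hm; apply: mono => //; lia.
move=> Hneg; exfalso.
pose P m := fun kk => (i kk == m) || (j kk == m).
pose K m := nth 0%N (iota 1 n) (find (P m) (iota 1 n)).
pose partner m := if i (K m) == m then j (K m) else i (K m).
have hK : forall m, (1 <= m <= 2 * n)%N ->
   (1 <= K m <= n)%N /\ ((i (K m) = m /\ partner m = j (K m)) \/
                         (j (K m) = m /\ partner m = i (K m))).
  move=> m hm.
  have hh : has (P m) (iota 1 n).
    have [kk [hkk hc]] := hcover m hm.
    apply/hasP; exists kk; first by rewrite mem_iota; lia.
    by rewrite /P; case: hc => ->; rewrite eqxx ?orbT.
  have hin : K m \in iota 1 n by apply: mem_nth; rewrite -has_find.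
  have hP := nth_find 0%N hh.
  rewrite mem_iota in hin; split; first lia.
  rewrite /partner; move: hP; rewrite /P -/(K m).
  case: (eqVneq (i (K m)) m) => [e _|hne /= /eqP hj].
    by left; rewrite e.
  by right.
have hpr : forall m, (t <= m <= 2 * n)%N -> (1 <= partner m < k)%N.
  move=> m hm.
  have hm' : (1 <= m <= 2 * n)%N by lia.
  have [hk [[e1 e2]|[e1 e2]]] := hK m hm'.
    have [/andP[r1 r2] /andP[r3 r4]] := hrange _ hk.
    rewrite e2; apply/andP; split => //.
    rewrite ltnNge; apply/negP => hle; apply: Hneg; exists (K m); split => //.
    left; split => //; lia.
  have [/andP[r1 r2] /andP[r3 r4]] := hrange _ hk.
  rewrite e2; apply/andP; split => //.
  rewrite ltnNge; apply/negP => hle; apply: Hneg; exists (K m); split => //.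
  right; split => //; lia.
have hinjp : {in iota t k &, injective partner}.
  move=> m1 m2; rewrite !mem_iota => hm1 hm2 hp.
  have hm1' : (1 <= m1 <= 2 * n)%N by lia.
  have hm2' : (1 <= m2 <= 2 * n)%N by lia.
  have [hk1' H1] := hK m1 hm1'.
  have [hk2' H2] := hK m2 hm2'.
  case: (eqVneq (K m1) (K m2)) => e.
    have hijc := hij _ hk1'.
    move: H1 H2 hp; rewrite -e; case=> [[? ?]|[? ?]] [[? ?]|[? ?]]; congruence.
  have e' : K m1 <> K m2 by apply/eqP.
  have := hinj _ _ hk1' hk2' e'.
  case: H1 H2 => [[? ?]|[? ?]] [[? ?]|[? ?]]; intuition congruence.
have hu : uniq (map partner (iota t k)) by rewrite map_inj_in_uniq // iota_uniq.
have hs : {subset map partner (iota t k) <= iota 1 k.-1}.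
  move=> x /mapP[m]; rewrite mem_iota => hm ->.
  have hm' : (t <= m <= 2 * n)%N by lia.
  rewrite mem_iota; have := hpr m hm'; lia.
have := uniq_leq_size hu hs; rewrite size_map !size_iota; lia.
Qed.
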